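(* Let $H_n=\sum_{j=1}^n\frac1j$, let $\gamma$ be the Euler–Mascheroni constant, $\Gamma$ the gamma function and $G$ the Barnes $G$-function. For $x > 0$, $$\sum_{n = 1}^\infty (-1)^n n\left(H_n - \log(n + x - 1) - \gamma + \frac{x}{n} - \frac{3}{2n}\right) = \frac{\gamma }{4} - \frac{x -\log (2) - 1}{2} - 2 \log \left[\frac{G\left(\frac{x+1}{2}\right)}{G\left(\frac{x}{2}\right)}\right] + \log\Gamma \left(\frac{x}{2}\right).$$
   Context: The Barnes $G$-function is the entire function $G(z+1) = (2\pi)^{z/2} e^{-\frac{z+z^2(1+\gamma)}{2}} \prod_{m=1}^\infty \left(1+\frac{z}{m}\right)^m e^{-z+\frac{z^2}{2m}}$; it satisfies $G(1)=1$ and $G(z+1)=\Gamma(z)G(z)$. *)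

(* Defs.v *)
From Stdlib Require Import Reals.
From Coquelicot Require Import Coquelicot.
Open Scope R_scope.

Fixpoint harmonic (n : nat) : R :=
  match n with
  | O => 0
  | S m => harmonic m + / INR (S m)
  end.

Definition euler_gamma : R := real (Lim_seq (fun n => harmonic n - ln (INR n))).

Fixpoint rising_prod (x : R) (n : nat) : R :=
  match n with
  | O => x
  | S m => rising_prod x m * (x + INR (S m))
  end.

(* Gamma function for x > 0, via Gauss' limit formula
   Gamma(x) = lim_{n->oo} n! n^x / (x (x+1) ... (x+n)). *)
Definition Gamma (x : R) : R :=
  real (Lim_seq (fun n => INR (Factorial.fact n) * Rpower (INR n) x / rising_prod x n)).

(* Partial Weierstrass product of the Barnes G-function:
   prod_{m=1}^{N} (1 + w/m)^m exp(-w + w^2/(2m)). *)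
Fixpoint barnes_partial (w : R) (N : nat) : R :=
  match N with
  | O => 1
  | S M => barnes_partial w M *
           ((1 + w / INR (S M)) ^ (S M) * exp (- w + w ^ 2 / (2 * INR (S M))))
  end.

(* Barnes G-function (on reals):  G(w+1) = (2 pi)^{w/2} e^{-(w + w^2(1+gamma))/2}
   prod_{m>=1} (1+w/m)^m e^{-w + w^2/(2m)}. *)
Definition BarnesG (z : R) : R :=
  let w := z - 1 in
  Rpower (2 * PI) (w / 2) * exp (- (w + w ^ 2 * (1 + euler_gamma)) / 2)
  * real (Lim_seq (barnes_partial w)).

(* Main.v *)
Require Import Defs.
From Stdlib Require Import Reals.
From Coquelicot Require Import Coquelicot.
Open Scope R_scope.
From Stdlib Require Import Lra Lia.

Lemma rate_lim (u v : nat -> R) (n0 : nat) :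
  (forall n, (n0 <= n)%nat -> Rabs (u (S n) - u n) <= v n - v (S n)) ->
  is_lim_seq v 0 ->
  exists l : R, is_lim_seq u l /\ forall n, (n0 <= n)%nat -> Rabs (u n - l) <= v n.
Proof.
  intros H Hv.
  assert (Hk : forall n k, (n0 <= n)%nat -> Rabs (u (n + k)%nat - u n) <= v n - v (n + k)%nat).
  { intros n k Hn. induction k.
    - rewrite Nat.add_0_r. unfold Rminus. rewrite !Rplus_opp_r, Rabs_R0. lra.
    - replace (n + S k)%nat with (S (n + k)) by lia.
      specialize (H (n + k)%nat ltac:(lia)).
      eapply Rle_trans. 2: { assert (v n - v (S (n+k)) = (v n - v (n+k)%nat) + (v (n+k)%nat - v (S (n+k)))) by ring. rewrite H0. apply Rplus_le_compat. exact IHk. exact H. }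
      replace (u (S (n + k)) - u n) with ((u (n+k)%nat - u n) + (u (S (n+k)) - u (n+k)%nat)) by ring.
      apply Rabs_triang. }
  assert (Hc : ex_finite_lim_seq u).
  { apply ex_lim_seq_cauchy_corr. intros eps.
    apply is_lim_seq_spec in Hv.
    destruct (Hv (pos_div_2 eps)) as [N HN].
    exists (N + n0)%nat. intros n m Hn Hm.
    assert (A1 := HN n ltac:(lia)). assert (A2 := HN m ltac:(lia)).
    simpl in A1, A2. rewrite Rminus_0_r in A1, A2.
    destruct (Nat.le_ge_cases n m) as [Hnm|Hnm].
    - replace m with (n + (m - n))%nat by lia.
      rewrite <- Rabs_Ropp. rewrite Ropp_minus_distr.
      eapply Rle_lt_trans. apply Hk. lia.
      replace (n + (m - n))%nat with m by lia.
      apply Rabs_lt_between in A1. apply Rabs_lt_between in A2. destruct eps; simpl in *. lra.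
    - replace n with (m + (n - m))%nat by lia.
      eapply Rle_lt_trans. apply Hk. lia.
      replace (m + (n - m))%nat with n by lia.
      apply Rabs_lt_between in A1. apply Rabs_lt_between in A2. destruct eps; simpl in *. lra. }
  destruct Hc as [l Hl]. exists l. split; auto.
  intros n Hn.
  assert (L1 : is_lim_seq (fun k => Rabs (u (k + n)%nat - u n)) (Rabs (l - u n))).
  { apply (is_lim_seq_abs _ (Finite (l - u n))).
    apply (is_lim_seq_minus' _ _ l (u n)). apply (is_lim_seq_incr_n u n). exact Hl.
    apply is_lim_seq_const. }
  assert (L2 : is_lim_seq (fun k => v n - v (k + n)%nat) (v n - 0)).
  { apply is_lim_seq_minus'. apply is_lim_seq_const. apply (is_lim_seq_incr_n v n). exact Hv. }
  assert (Hkk : forall k, Rabs (u (k + n)%nat - u n) <= v n - v (k + n)%nat).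
  { intros k. rewrite Nat.add_comm. apply Hk. exact Hn. }
  assert (Hle := is_lim_seq_le _ _ _ _ Hkk L1 L2).
  simpl in Hle. rewrite <- Rabs_Ropp, Ropp_minus_distr. lra.
Qed.

Lemma ln_taylor2 t : Rabs t <= 1/2 -> Rabs (ln (1+t) - t + t^2/2) <= 2 * Rabs t ^ 3.
Proof.
  intros Ht.
  apply Rabs_le_between in Ht.
  destruct (MVT_gen (fun s => ln (1+s) - s + s^2/2) 0 t (fun s => s^2/(1+s))) as [c [Hc Hf]].
  - intros s Hs. unfold Rmin, Rmax in Hs. destruct (Rle_dec 0 t); auto_derive.
    lra. field. lra. lra. field. lra.
  - intros s Hs. unfold Rmin, Rmax in Hs. apply continuity_pt_filterlim.
    apply (ex_derive_continuous (fun s => ln (1+s) - s + s^2/2)). destruct (Rle_dec 0 t); auto_derive; lra.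
  - unfold Rmin, Rmax in Hc. rewrite Rplus_0_r, ln_1 in Hf.
    replace (ln (1+t) - t + t^2/2) with (c^2/(1+c) * t) by lra.
    assert (Hca : Rabs c <= Rabs t).
    { unfold Rabs; destruct (Rcase_abs c), (Rcase_abs t); destruct (Rle_dec 0 t); lra. }
    assert (H1c : 1/2 <= 1 + c) by (destruct (Rle_dec 0 t); lra).
    rewrite Rabs_mult. unfold Rdiv. rewrite Rabs_mult.
    rewrite (Rabs_pos_eq (/ (1+c))) by (left; apply Rinv_0_lt_compat; lra).
    rewrite <- RPow_abs.
    assert (/ (1 + c) <= 2). { replace 2 with (/ (1/2)) by field. apply Rinv_le_contravar; lra. }
    assert (0 <= Rabs c) by apply Rabs_pos.
    assert (Rabs c ^ 2 <= Rabs t ^ 2) by (apply pow_incr; lra).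
    assert (0 <= Rabs t) by apply Rabs_pos.
    assert (0 <= / (1+c)) by (left; apply Rinv_0_lt_compat; lra).
    replace (2 * Rabs t ^ 3) with (Rabs t ^ 2 * 2 * Rabs t) by ring.
    apply Rmult_le_compat_r; auto. apply Rmult_le_compat; auto. apply pow_le; auto.
Qed.

Lemma lim_inv_n : is_lim_seq (fun n => / INR n) 0.
Proof.
  assert (H := is_lim_seq_inv _ _ is_lim_seq_INR ltac:(discriminate)). simpl in H. exact H.
Qed.



Lemma lim_scal (u : nat -> R) (a l : R) : is_lim_seq u l -> is_lim_seq (fun n => a * u n) (a * l).
Proof. intros H. apply is_lim_seq_mult'. apply is_lim_seq_const. exact H. Qed.

Lemma lim_K_n1 (K : R) : is_lim_seq (fun n => K / INR n) 0.
Proof.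
  replace 0 with (K * 0) by ring. apply (lim_scal (fun n => / INR n)). exact lim_inv_n.
Qed.

Lemma lim_K_n2 (K : R) : is_lim_seq (fun n => K / INR n ^ 2) 0.
Proof.
  replace 0 with (K * 0 * 0) by ring.
  apply (is_lim_seq_ext (fun n => K * / INR n * / INR n)).
  { intros n. simpl. unfold Rdiv. rewrite Rmult_1_r. rewrite Rinv_mult. ring. }
  apply is_lim_seq_mult'. apply (lim_scal (fun n => / INR n)). exact lim_inv_n. exact lim_inv_n.
Qed.

Lemma ln_shift a b : 0 < a -> 0 < a + b -> ln (a + b) = ln a + ln (1 + b/a).
Proof.
  intros Ha Hb. rewrite <- ln_mult; auto. f_equal. field. lra.
  apply Rmult_lt_reg_l with a; auto. rewrite Rmult_0_r. field_simplify; lra.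
Qed.

Lemma inv_n_small n : (2 <= n)%nat -> 0 < / INR n <= 1/2.
Proof.
  intros Hn. apply le_INR in Hn. simpl in Hn. split.
  apply Rinv_0_lt_compat; lra.
  replace (1/2) with (/ 2) by field. apply Rinv_le_contravar; lra.
Qed.

Lemma ln_taylor1 t : Rabs t <= 1/2 -> Rabs (ln (1+t) - t) <= 2 * t^2.
Proof.
  intros Ht. assert (H := ln_taylor2 t Ht).
  replace (ln (1+t) - t) with ((ln (1+t) - t + t^2/2) + (- (t^2/2))) by ring.
  eapply Rle_trans. apply Rabs_triang. rewrite Rabs_Ropp.
  rewrite (Rabs_pos_eq (t^2/2)) by (apply Rmult_le_pos; [apply pow2_ge_0|lra]).
  assert (0 <= Rabs t) by apply Rabs_pos.
  assert (Rabs t ^ 3 <= t^2 / 2).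
  { rewrite <- (pow2_abs t). simpl. nra. }
  assert (0 <= t^2) by apply pow2_ge_0.
  lra.
Qed.

Definition u_g n := harmonic n - ln (INR n).
Definition f_g n := u_g n - / (2 * INR n).

Lemma fg_step n : (2 <= n)%nat -> Rabs (f_g (S n) - f_g n) <= 3 / INR n ^ 2 - 3 / INR (S n) ^ 2.
Proof.
  intros Hn. assert (Ht := inv_n_small n Hn).
  assert (HN : 2 <= INR n) by (apply le_INR in Hn; simpl in Hn; lra).
  set (N := INR n) in *. set (t := / N) in *.
  unfold f_g, u_g. change (harmonic (S n)) with (harmonic n + / INR (S n)). rewrite S_INR. fold N.
  rewrite (ln_shift N 1) by lra.
  replace (1 / N) with t by (unfold t; field; lra).
  replace (harmonic n + / (N + 1) - (ln N + ln (1 + t)) - / (2 * (N + 1)) -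
   (harmonic n - ln N - / (2 * N))) with (- (ln (1+t) - t + t^2/2) + t^3/(2*(1+t))).
  2:{ unfold t. field. lra. }
  eapply Rle_trans. apply Rabs_triang. rewrite Rabs_Ropp.
  assert (H2 := ln_taylor2 t ltac:(rewrite Rabs_pos_eq; lra)).
  rewrite (Rabs_pos_eq t) in H2 by lra.
  rewrite (Rabs_pos_eq (t^3/(2*(1+t)))).
  2:{ apply Rmult_le_pos. apply pow_le; lra. left; apply Rinv_0_lt_compat; lra. }
  assert (t^3/(2*(1+t)) <= t^3/2).
  { unfold Rdiv. apply Rmult_le_compat_l. apply pow_le; lra. apply Rinv_le_contravar; lra. }
  assert (3 / N ^ 2 - 3 / (N + 1) ^ 2 - 5/2 * t^3 = (7 * N^2 - 4 * N - 5) / (2 * N^3 * (N+1)^2)).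
  { unfold t. field. lra. }
  assert (0 <= (7 * N^2 - 4 * N - 5) / (2 * N^3 * (N+1)^2)).
  { apply Rmult_le_pos. nra. left. apply Rinv_0_lt_compat. 
    apply Rmult_lt_0_compat. apply Rmult_lt_0_compat. lra. apply pow_lt; lra. apply pow_lt; lra. }
  lra.
Qed.

Lemma euler_lim : is_lim_seq u_g euler_gamma
  /\ is_lim_seq (fun n => INR n * (u_g n - euler_gamma)) (1/2).
Proof.
  destruct (rate_lim f_g (fun n => 3 / INR n ^ 2) 2 fg_step (lim_K_n2 3)) as [l [Hl Hb]].
  assert (Hu : is_lim_seq u_g l).
  { apply (is_lim_seq_ext (fun n => f_g n + / 2 * / INR n)).
    { intros n. unfold f_g. rewrite Rinv_mult. ring. }
    replace (Finite l) with (Finite (l + / 2 * 0)) by (f_equal; ring).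
    apply is_lim_seq_plus'. exact Hl. apply lim_scal. exact lim_inv_n. }
  assert (Hg : euler_gamma = l).
  { unfold euler_gamma. fold u_g. rewrite (is_lim_seq_unique _ _ Hu). reflexivity. }
  rewrite Hg. split; auto.
  apply (is_lim_seq_ext_loc (fun n => INR n * (f_g n - l) + 1/2)).
  { exists 1%nat. intros n Hn. unfold f_g. apply le_INR in Hn. simpl in Hn. field. lra. }
  replace (Finite (1/2)) with (Finite (0 + 1/2)) by (f_equal; ring).
  apply is_lim_seq_plus'. 2: apply is_lim_seq_const.
  apply is_lim_seq_abs_0.
  apply (is_lim_seq_le_le_loc (fun _ => 0) _ (fun n => 3 / INR n)).
  { exists 2%nat. intros n Hn. split. apply Rabs_pos.
    assert (HN : 2 <= INR n) by (apply le_INR in Hn; simpl in Hn; lra).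
    rewrite Rabs_mult, Rabs_pos_eq by lra.
    assert (H := Hb n Hn).
    replace (3 / INR n) with (INR n * (3 / INR n ^ 2)) by (field; lra).
    apply Rmult_le_compat_l; lra. }
  apply is_lim_seq_const. apply lim_K_n1.
Qed.

Definition W n := RInt (fun t => sin t ^ n) 0 (PI/2).

Lemma sinpow_cont n z : continuous (fun t => sin t ^ n) z.
Proof. apply (ex_derive_continuous (fun t => sin t ^ n)). auto_derive. auto. Qed.

Lemma W_ex n : ex_RInt (fun t => sin t ^ n) 0 (PI/2).
Proof. apply (@ex_RInt_continuous R_CompleteNormedModule). intros. apply sinpow_cont. Qed.

Lemma W_rec n : INR (n+2) * W (n+2) = INR (n+1) * W n.
Proof.
  assert (H : is_RInt (fun t => INR (n+2) * sin t ^ (n+2) - INR (n+1) * sin t ^ n) 0 (PI/2)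
           (minus (- cos (PI/2) * sin (PI/2) ^ (S n)) (- cos 0 * sin 0 ^ (S n)))).
  { apply (@is_RInt_derive R_CompleteNormedModule (fun t => - cos t * sin t ^ (S n))).
    - intros x _. auto_derive. auto.
      change (match n with 0%nat => 1 | S _ => INR n + 1 end) with (INR (S n)).
      rewrite !plus_INR, S_INR, !pow_add. simpl INR.
      assert (Hc : cos x ^ 2 = 1 - sin x ^ 2) by (generalize (sin2_cos2 x); unfold Rsqr; simpl; lra).
      ring_simplify. rewrite Hc. ring.
    - intros x _. apply (ex_derive_continuous (fun t : R => INR (n + 2) * sin t ^ (n + 2) - INR (n + 1) * sin t ^ n)).
      auto_derive. auto. }
  rewrite cos_PI2, sin_PI2, sin_0, cos_0 in H. unfold minus, plus, opp in H. simpl in H.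
  match type of H with is_RInt _ _ _ ?v => replace v with 0 in H by ring end.
  assert (H2 : is_RInt (fun t => INR (n + 2) * sin t ^ (n + 2) - INR (n + 1) * sin t ^ n) 0 (PI/2)
     (INR (n+2) * W (n+2) - INR (n+1) * W n)).
  { apply (@is_RInt_minus R_CompleteNormedModule (fun t => INR (n + 2) * sin t ^ (n + 2)) (fun t => INR (n + 1) * sin t ^ n));
    apply (@is_RInt_scal R_CompleteNormedModule); apply (RInt_correct (V:=R_CompleteNormedModule)); apply W_ex. }
  apply (@is_RInt_unique R_CompleteNormedModule) in H.
  apply (@is_RInt_unique R_CompleteNormedModule) in H2. lra.
Qed.

Lemma W_0 : W 0 = PI/2.
Proof. unfold W. simpl. rewrite RInt_const. unfold scal. simpl. unfold mult. simpl. ring. Qed.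

Lemma W_1 : W 1 = 1.
Proof.
  unfold W. apply (@is_RInt_unique R_CompleteNormedModule).
  replace 1 with (minus (- cos (PI/2)) (- cos 0)).
  2:{ rewrite cos_PI2, cos_0. unfold minus, plus, opp. simpl. ring. }
  apply (@is_RInt_derive R_CompleteNormedModule (fun t => - cos t)).
  - intros x _. auto_derive. auto. ring.
  - intros x _. apply (sinpow_cont 1).
Qed.


Lemma W_decr n : W (S n) <= W n.
Proof.
  unfold W. apply RInt_le. generalize PI_RGT_0; lra. exact (W_ex (S n)). exact (W_ex n).
  intros x Hx. assert (0 <= sin x) by (apply sin_ge_0; generalize PI_RGT_0; lra).
  assert (sin x <= 1) by exact (proj2 (SIN_bound x)).
  assert (0 <= sin x ^ n) by (apply pow_le; auto).
  simpl. nra.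
Qed.

Lemma W_pos n : 0 < W n.
Proof.
  assert (forall n, 0 < W n /\ 0 < W (S n)).
  { induction n0.
    - rewrite W_0, W_1. generalize PI_RGT_0; lra.
    - destruct IHn0 as [H1 H2]. split. exact H2.
      assert (E := W_rec n0). replace (n0 + 2)%nat with (S (S n0)) in E by lia.
      rewrite plus_INR, !S_INR in E. simpl INR in E.
      assert (0 <= INR n0) by apply pos_INR.
      assert (0 < W (S (S n0)) * (INR n0 + 1 + 1)) by nra. nra. }
  exact (proj1 (H n)).
Qed.

Fixpoint pw (n : nat) : R := match n with O => 1 | S m => pw m * ((2 * INR m + 1) / (2 * INR m + 2)) end.

Lemma pw_pos n : 0 < pw n.
Proof.
  induction n; simpl. lra. assert (0 <= INR n) by apply pos_INR.
  apply Rmult_lt_0_compat; auto. apply Rmult_lt_0_compat. lra. apply Rinv_0_lt_compat; lra.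
Qed.

Lemma W_rec' m : (INR m + 2) * W (S (S m)) = (INR m + 1) * W m.
Proof.
  assert (E := W_rec m). replace (m + 2)%nat with (S (S m)) in E by lia.
  rewrite plus_INR in E. rewrite (S_INR (S m)), (S_INR m) in E. change (INR 1) with 1 in E. lra.
Qed.

Lemma INR_2n n : INR (2 * n) = 2 * INR n.
Proof. rewrite mult_INR. reflexivity. Qed.

Lemma W_closed n : W (2 * n) = PI / 2 * pw n /\ W (S (2 * n)) = / ((2 * INR n + 1) * pw n).
Proof.
  induction n.
  - simpl. rewrite W_0, W_1. split. ring. field.
  - destruct IHn as [H1 H2].
    assert (Hp := pw_pos n). assert (0 <= INR n) by apply pos_INR.
    assert (E1 := W_rec' (2 * n)). assert (E2 := W_rec' (S (2 * n))).
    replace (S (S (2 * n))) with (2 * S n)%nat in E1 by lia.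
    replace (S (S (S (2 * n)))) with (S (2 * S n))%nat in E2 by lia.
    rewrite S_INR in E2. rewrite INR_2n in E1, E2.
    rewrite H1 in E1. rewrite H2 in E2.
    simpl pw. rewrite S_INR. split.
    + apply Rmult_eq_reg_l with (2 * INR n + 2). 2: lra.
      rewrite E1. field. lra.
    + apply Rmult_eq_reg_l with (2 * INR n + 1 + 2). 2: lra.
      rewrite E2. field. repeat split; lra.
Qed.

Lemma wallis_lim : is_lim_seq (fun n => PI / 2 * (2 * INR n + 1) * pw n ^ 2) 1.
Proof.
  apply (is_lim_seq_le_le_loc (fun _ => 1) _ (fun n => 1 + / 2 * / INR n)).
  - exists 1%nat. intros n Hn. destruct n as [|k]; [lia|].
    destruct (W_closed (S k)) as [H1 H2].
    assert (Hp := pw_pos (S k)).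
    assert (A1 := W_decr (2 * S k)). assert (A2 := W_decr (S (2 * k))).
    replace (S (S (2 * k))) with (2 * S k)%nat in A2 by lia.
    assert (E := W_rec' (S (2 * k))).
    replace (S (S (S (2 * k)))) with (S (2 * S k)) in E by lia.
    rewrite S_INR, INR_2n in E.
    rewrite (S_INR k) in *. set (N := INR k + 1) in *.
    assert (HN : 1 <= N) by (unfold N; generalize (pos_INR k); lra).
    set (p := pw (S k)) in *.
    rewrite H1 in A1, A2. rewrite H2 in A1, E.
    assert (HW : W (S (2 * k)) = (2 * N + 1) / (2 * N) / ((2 * N + 1) * p)).
    { apply Rmult_eq_reg_l with (2 * INR k + 1 + 1). rewrite <- E. unfold N in *. field. repeat split; lra. unfold N in HN. lra. }
    rewrite HW in A2.
    assert (Hq : 0 < (2 * N + 1) * p) by nra.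
    split.
    + apply Rmult_le_reg_r with (/ ((2 * N + 1) * p)).
      apply Rinv_0_lt_compat. exact Hq.
      replace (PI / 2 * (2 * N + 1) * p ^ 2 * / ((2 * N + 1) * p)) with (PI / 2 * p) by (field; split; lra).
      lra.
    + apply Rmult_le_reg_r with (/ ((2 * N + 1) * p)).
      apply Rinv_0_lt_compat. exact Hq.
      replace (PI / 2 * (2 * N + 1) * p ^ 2 * / ((2 * N + 1) * p)) with (PI / 2 * p) by (field; split; lra).
      replace ((1 + / 2 * / N) * / ((2 * N + 1) * p)) with ((2 * N + 1) / (2 * N) / ((2 * N + 1) * p)) by (field; split; lra).
      lra.
  - apply is_lim_seq_const.
  - replace (Finite 1) with (Finite (1 + / 2 * 0)) by (f_equal; ring).
    apply is_lim_seq_plus'. apply is_lim_seq_const.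
    apply is_lim_seq_mult'. apply is_lim_seq_const.
    assert (H := is_lim_seq_inv _ _ is_lim_seq_INR ltac:(discriminate)). simpl in H. exact H.
Qed.

Lemma lim_ln_cont (u : nat -> R) (l : R) : 0 < l -> is_lim_seq u l -> is_lim_seq (fun n => ln (u n)) (ln l).
Proof.
  intros Hl H. apply is_lim_seq_continuous; auto.
  apply continuity_pt_filterlim. apply continuous_ln. exact Hl.
Qed.

Fixpoint lf (n : nat) : R := match n with O => 0 | S m => lf m + ln (INR (S m)) end.
Definition dS n := lf n - (INR n + 1/2) * ln (INR n) + INR n.

Lemma dS_step n : (2 <= n)%nat -> Rabs (dS (S n) - dS n) <= 6 / INR n - 6 / INR (S n).
Proof.
  intros Hn. assert (Ht := inv_n_small n Hn).
  assert (HN : 2 <= INR n) by (apply le_INR in Hn; simpl in Hn; lra).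
  unfold dS. change (lf (S n)) with (lf n + ln (INR (S n))). rewrite S_INR.
  set (N := INR n) in *. set (t := / N) in *.
  rewrite (ln_shift N 1) by lra.
  replace (1 / N) with t by (unfold t; field; lra).
  set (r := ln (1 + t) - t + t^2/2).
  assert (Hr := ln_taylor2 t ltac:(rewrite Rabs_pos_eq; lra)). fold r in Hr.
  rewrite (Rabs_pos_eq t) in Hr by lra.
  replace (lf n + (ln N + ln (1 + t)) - (N + 1 + 1 / 2) * (ln N + ln (1 + t)) + (N + 1) -
   (lf n - (N + 1 / 2) * ln N + N)) with (t^2/4 - (N + 1/2) * r).
  2:{ unfold r, t. field. lra. }
  eapply Rle_trans. apply Rabs_triang. rewrite Rabs_Ropp.
  rewrite (Rabs_pos_eq (t^2/4)) by (generalize (pow2_ge_0 t); lra).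
  rewrite Rabs_mult, (Rabs_pos_eq (N + 1/2)) by lra.
  assert ((N + 1/2) * Rabs r <= (N + 1/2) * (2 * t^3)) by (apply Rmult_le_compat_l; lra).
  assert (E : (N + 1/2) * (2 * t^3) = 2 * t^2 + t^3) by (unfold t; field; lra).
  assert (t^3 <= t^2 / 2) by (simpl; nra).
  assert (6 / N - 6 / (N + 1) - 3 * t^2 = 3 * (N - 1) / (N^2 * (N + 1))) by (unfold t; field; lra).
  assert (0 <= 3 * (N - 1) / (N^2 * (N + 1))).
  { apply Rmult_le_pos. lra. left. apply Rinv_0_lt_compat. apply Rmult_lt_0_compat. nra. lra. }
  assert (0 <= t^2) by apply pow2_ge_0.
  lra.
Qed.

Lemma lnpw n : ln (pw n) = lf (2 * n) - 2 * lf n - 2 * INR n * ln 2.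
Proof.
  induction n.
  - simpl. rewrite ln_1. ring.
  - assert (0 <= INR n) by apply pos_INR.
    simpl pw. rewrite ln_mult. 2: apply pw_pos.
    2:{ apply Rmult_lt_0_compat. lra. apply Rinv_0_lt_compat; lra. }
    rewrite IHn. unfold Rdiv. rewrite ln_mult by (try apply Rinv_0_lt_compat; lra).
    rewrite ln_Rinv by lra.
    replace (2 * S n)%nat with (S (S (2 * n))) by lia.
    change (lf (S (S (2 * n)))) with (lf (2 * n) + ln (INR (S (2 * n))) + ln (INR (S (S (2 * n))))).
    change (lf (S n)) with (lf n + ln (INR (S n))).
    rewrite !S_INR, INR_2n.
    replace (2 * INR n + 1 + 1) with (2 * (INR n + 1)) by ring.
    replace (2 * INR n + 2) with (2 * (INR n + 1)) by ring.
    rewrite ln_mult by lra. ring.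
Qed.

Lemma stirling_const : is_lim_seq dS (ln (2 * PI) / 2).
Proof.
  destruct (rate_lim dS (fun n => 6 / INR n) 2 dS_step (lim_K_n1 6)) as [C [HC _]].
  assert (Hsub : is_lim_seq (fun n => dS (2 * n)) C).
  { apply (is_lim_seq_subseq dS C (fun n => (2 * n)%nat)). apply eventually_subseq. intros; lia. exact HC. }
  assert (Hw := lim_ln_cont _ 1 ltac:(lra) wallis_lim). rewrite ln_1 in Hw.
  assert (Hr : is_lim_seq (fun n => ln (2 + / INR n)) (ln (2 + 0))).
  { apply lim_ln_cont. lra. apply is_lim_seq_plus'. apply is_lim_seq_const. exact lim_inv_n. }
  rewrite Rplus_0_r in Hr.
  assert (HX : is_lim_seq (fun n => ln (PI/2) + ln (2 + / INR n) + 2 * dS (2 * n) - 4 * dS n + ln 2)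
                 (ln (PI/2) + ln 2 + 2 * C - 4 * C + ln 2)).
  { apply is_lim_seq_plus'. apply is_lim_seq_minus'. apply is_lim_seq_plus'. apply is_lim_seq_plus'.
    apply is_lim_seq_const. exact Hr. apply lim_scal. exact Hsub. apply lim_scal. exact HC. apply is_lim_seq_const. }
  assert (HX' : is_lim_seq (fun n => ln (PI/2) + ln (2 + / INR n) + 2 * dS (2 * n) - 4 * dS n + ln 2) 0).
  { apply (is_lim_seq_ext_loc (fun n => ln (PI / 2 * (2 * INR n + 1) * pw n ^ 2))). 2: exact Hw.
    exists 1%nat. intros n Hn.
    assert (HN : 1 <= INR n) by (apply le_INR in Hn; exact Hn).
    assert (Hp := pw_pos n). assert (HPI := PI_RGT_0).
    rewrite ln_mult by (try apply pow_lt; auto; apply Rmult_lt_0_compat; lra).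
    rewrite ln_mult by lra. rewrite ln_pow by auto. rewrite lnpw.
    unfold dS. rewrite INR_2n. rewrite (ln_mult 2 (INR n)) by lra.
    replace (2 * INR n + 1) with (INR n * (2 + / INR n)) by (field; lra).
    rewrite ln_mult. 2: lra. 2: { assert (0 < / INR n) by (apply Rinv_0_lt_compat; lra). lra. }
    change (INR 2) with 2. field. }
  assert (Heq := is_lim_seq_unique _ _ HX). rewrite (is_lim_seq_unique _ _ HX') in Heq.
  injection Heq as Heq.
  replace (ln (2 * PI) / 2) with C. exact HC.
  assert (HPI := PI_RGT_0). rewrite ln_mult by lra. unfold Rdiv in Heq. rewrite ln_mult, ln_Rinv in Heq by (generalize PI_RGT_0; lra).
  lra.
Qed.

Lemma conv_n2 (u : nat -> R) (K : R) (n0 : nat) : (1 <= n0)%nat ->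
  (forall n, (n0 <= n)%nat -> Rabs (u (S n) - u n) <= K / INR n ^ 2) ->
  exists l : R, is_lim_seq u l.
Proof.
  intros Hn0 H.
  destruct (rate_lim u (fun n => 2 * K / INR n) n0) as [l [Hl _]].
  - intros n Hn. eapply Rle_trans. apply H; auto.
    assert (HN : 1 <= INR n) by (apply le_INR in Hn; apply le_INR in Hn0; simpl in Hn0; lra).
    assert (HK : 0 <= K).
    { assert (A := H n Hn). assert (B := Rabs_pos (u (S n) - u n)).
      assert (0 < INR n ^ 2) by (apply pow_lt; lra).
      destruct (Rle_dec 0 K); auto. exfalso.
      assert (K / INR n ^ 2 < 0). { unfold Rdiv. apply Rmult_neg_pos. lra. apply Rinv_0_lt_compat; auto. } lra. }
    rewrite S_INR.
    assert (E : 2 * K / INR n - 2 * K / (INR n + 1) - K / INR n ^ 2 = K * (INR n - 1) / (INR n ^ 2 * (INR n + 1))).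
    { field. lra. }
    assert (0 <= K * (INR n - 1) / (INR n ^ 2 * (INR n + 1))).
    { apply Rmult_le_pos. apply Rmult_le_pos; lra. left. apply Rinv_0_lt_compat. apply Rmult_lt_0_compat. apply pow_lt; lra. lra. }
    lra.
  - apply lim_K_n1.
  - exists l. exact Hl.
Qed.

Lemma big_nat (A : R) : exists n0 : nat, (1 <= n0)%nat /\ A <= INR n0.
Proof.
  destruct (INR_unbounded A) as [n Hn]. exists (S n). split. lia. rewrite S_INR. lra.
Qed.

Fixpoint lr (y : R) (n : nat) : R := match n with O => ln y | S m => lr y m + ln (y + INR (S m)) end.
Definition gseq y n := lf n + y * ln (INR n) - lr y n.

Lemma rising_pos y n : 0 < y -> 0 < rising_prod y n /\ ln (rising_prod y n) = lr y n.
Proof.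
  intros Hy. induction n.
  - simpl. split; [exact Hy | reflexivity].
  - destruct IHn as [H1 H2]. assert (0 <= INR (S n)) by apply pos_INR.
    change (rising_prod y (S n)) with (rising_prod y n * (y + INR (S n))). change (lr y (S n)) with (lr y n + ln (y + INR (S n))).
    split. apply Rmult_lt_0_compat; lra. rewrite ln_mult by lra. rewrite H2. reflexivity.
Qed.

Lemma lf_fact n : ln (INR (Factorial.fact n)) = lf n.
Proof.
  induction n. simpl. apply ln_1.
  change (Factorial.fact (S n)) with (S n * Factorial.fact n)%nat. rewrite mult_INR, ln_mult.
  rewrite IHn. change (lf (S n)) with (lf n + ln (INR (S n))). ring. apply lt_0_INR. lia. apply lt_0_INR. apply Factorial.lt_O_fact.
Qed.

Lemma gseq_step y n : 0 < y -> (2 <= n)%nat -> 2 * y <= INR n ->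
  Rabs (gseq y (S n) - gseq y n) <= (3 * y + 2 * y^2) / INR n ^ 2.
Proof.
  intros Hy Hn Hyn.
  assert (HN : 2 <= INR n) by (apply le_INR in Hn; simpl in Hn; lra).
  unfold gseq. change (lf (S n)) with (lf n + ln (INR (S n))).
  change (lr y (S n)) with (lr y n + ln (y + INR (S n))). rewrite S_INR.
  set (N := INR n) in *.
  replace (y + (N + 1)) with ((N + 1) + y) by ring.
  rewrite (ln_shift (N+1) y) by lra.
  rewrite (ln_shift N 1) by lra.
  set (t := 1 / N). set (s := y / (N + 1)).
  assert (Ht0 : 0 < t) by (unfold t; unfold Rdiv; rewrite Rmult_1_l; apply Rinv_0_lt_compat; lra).
  assert (Ht : t <= 1/2) by (unfold t; apply Rmult_le_reg_l with N; [lra| field_simplify; lra]).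
  assert (Hs0 : 0 < s) by (unfold s; apply Rdiv_lt_0_compat; lra).
  assert (Hs : s <= 1/2) by (unfold s; apply Rmult_le_reg_l with (N+1); [lra| field_simplify; lra]).
  assert (A1 := ln_taylor1 t ltac:(rewrite Rabs_pos_eq; lra)).
  assert (A2 := ln_taylor1 s ltac:(rewrite Rabs_pos_eq; lra)).
  replace (lf n + (ln N + ln (1 + t)) + y * (ln N + ln (1 + t)) -
    (lr y n + (ln N + ln (1 + t) + ln (1 + s))) - (lf n + y * ln N - lr y n))
    with (y * (ln (1+t) - t) - (ln (1+s) - s) + y / (N * (N+1))).
  2:{ unfold t, s. field. lra. }
  eapply Rle_trans. apply Rabs_triang.
  eapply Rle_trans. apply Rplus_le_compat_r. apply Rabs_triang.
  rewrite Rabs_Ropp, Rabs_mult, (Rabs_pos_eq y) by lra.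
  rewrite (Rabs_pos_eq (y / (N * (N+1)))). 2: { apply Rdiv_le_0_compat; nra. }
  assert (B1 : y * Rabs (ln (1 + t) - t) <= y * (2 * t^2)) by (apply Rmult_le_compat_l; lra).
  assert (E1 : y * (2 * t^2) = 2 * y / N^2) by (unfold t; field; lra).
  assert (B2 : 2 * s^2 <= 2 * y^2 / N^2).
  { unfold s. unfold Rdiv. rewrite !Rpow_mult_distr. rewrite <- !Rinv_pow by lra.
    assert (0 < N^2) by (apply pow_lt; lra). assert (N^2 <= (N+1)^2) by (apply pow_incr; lra).
    assert (/ (N+1)^2 <= / N^2) by (apply Rinv_le_contravar; lra).
    assert (0 <= y^2) by apply pow2_ge_0. nra. }
  assert (B3 : y / (N * (N+1)) <= y / N^2).
  { unfold Rdiv. apply Rmult_le_compat_l. lra. apply Rinv_le_contravar. nra. simpl. nra. }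
  assert (E2 : (3 * y + 2 * y ^ 2) / N ^ 2 = 2 * y / N^2 + 2 * y^2 / N^2 + y / N^2) by (field; lra).
  lra.
Qed.

Lemma gamma_lim y : 0 < y -> exists LG : R, is_lim_seq (gseq y) LG /\ ln (Gamma y) = LG.
Proof.
  intros Hy.
  destruct (big_nat (2 * y + 2)) as [n0 [H0 H1]].
  destruct (conv_n2 (gseq y) (3 * y + 2 * y^2) n0 H0) as [LG HLG].
  { intros n Hn. apply gseq_step; auto.
    apply le_INR in Hn. assert (INR n >= 2) by lra. apply INR_le. simpl. lra.
    apply le_INR in Hn. lra. }
  exists LG. split; auto.
  unfold Gamma.
  assert (Hl : is_lim_seq (fun n => INR (Factorial.fact n) * Rpower (INR n) y / rising_prod y n) (exp LG)).
  { apply (is_lim_seq_ext_loc (fun n => exp (gseq y n))).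
    - exists 1%nat. intros n Hn. destruct (rising_pos y n Hy) as [P1 P2].
      assert (HN : 0 < INR n) by (apply lt_0_INR; lia).
      assert (HF : 0 < INR (Factorial.fact n)) by (apply lt_0_INR; apply Factorial.lt_O_fact).
      unfold gseq, Rpower. rewrite <- P2, <- lf_fact.
      unfold Rminus. rewrite !exp_plus, exp_Ropp, !exp_ln by auto. reflexivity.
    - apply is_lim_seq_continuous. apply derivable_continuous_pt, derivable_pt_exp. exact HLG. }
  rewrite (is_lim_seq_unique _ _ Hl). simpl. apply ln_exp.
Qed.

Fixpoint Lb (w : R) (M : nat) : R := match M with O => 0 | S m =>
  Lb w m + (INR (S m) * ln (1 + w / INR (S m)) - w + w^2 / (2 * INR (S m))) end.

Lemma one_plus_pos w m : -1 < w -> (1 <= m)%nat -> 0 < 1 + w / INR m.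
Proof.
  intros Hw Hm. apply le_INR in Hm. simpl in Hm.
  destruct (Rle_dec 0 w).
  - assert (0 <= w / INR m) by (apply Rdiv_le_0_compat; lra). lra.
  - assert (w <= w / INR m).
    { apply Rmult_le_reg_l with (INR m). lra. field_simplify. nra. lra. }
    lra.
Qed.

Lemma barnes_exp w M : -1 < w -> barnes_partial w M = exp (Lb w M).
Proof.
  intros Hw. induction M.
  - simpl. rewrite exp_0. reflexivity.
  - change (barnes_partial w (S M)) with (barnes_partial w M *
           ((1 + w / INR (S M)) ^ (S M) * exp (- w + w ^ 2 / (2 * INR (S M))))).
    change (Lb w (S M)) with (Lb w M + (INR (S M) * ln (1 + w / INR (S M)) - w + w^2 / (2 * INR (S M)))).
    rewrite IHM.
    assert (Hp := one_plus_pos w (S M) Hw ltac:(lia)).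
    rewrite <- (exp_ln ((1 + w / INR (S M)) ^ S M)) by (apply pow_lt; auto).
    rewrite ln_pow by auto.
    rewrite <- !exp_plus. f_equal. ring.
Qed.

Lemma Lb_step w M : 1 <= INR M -> 2 * Rabs w <= INR M ->
  Rabs (Lb w (S M) - Lb w M) <= 2 * Rabs w ^ 3 / INR M ^ 2.
Proof.
  intros H1 H2.
  change (Lb w (S M)) with (Lb w M + (INR (S M) * ln (1 + w / INR (S M)) - w + w^2 / (2 * INR (S M)))).
  rewrite S_INR. set (N := INR M) in *.
  set (t := w / (N + 1)).
  replace (Lb w M + ((N + 1) * ln (1 + t) - w + w ^ 2 / (2 * (N + 1))) - Lb w M)
    with ((N + 1) * (ln (1 + t) - t + t^2/2)) by (unfold t; field; lra).
  assert (Ht : Rabs t <= 1/2).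
  { unfold t, Rdiv. rewrite Rabs_mult, (Rabs_pos_eq (/ (N+1))) by (left; apply Rinv_0_lt_compat; lra).
    apply Rmult_le_reg_r with (N+1). lra. rewrite Rmult_assoc, Rinv_l by lra. lra. }
  assert (A := ln_taylor2 t Ht).
  rewrite Rabs_mult, (Rabs_pos_eq (N+1)) by lra.
  eapply Rle_trans. apply Rmult_le_compat_l. lra. exact A.
  assert (E : Rabs t = Rabs w / (N + 1)).
  { unfold t, Rdiv. rewrite Rabs_mult, (Rabs_pos_eq (/ (N+1))) by (left; apply Rinv_0_lt_compat; lra). reflexivity. }
  rewrite E.
  assert (0 <= Rabs w) by apply Rabs_pos.
  replace ((N + 1) * (2 * (Rabs w / (N + 1)) ^ 3)) with (2 * Rabs w ^ 3 / (N + 1)^2) by (field; lra).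
  unfold Rdiv. apply Rmult_le_compat_l. apply Rmult_le_pos. lra. apply pow_le; auto.
  apply Rinv_le_contravar. apply pow_lt; lra. apply pow_incr; lra.
Qed.

Lemma barnes_lim w : -1 < w -> exists LB : R, is_lim_seq (Lb w) LB /\ Lim_seq (barnes_partial w) = exp LB.
Proof.
  intros Hw.
  destruct (big_nat (2 * Rabs w + 1)) as [n0 [H0 H1]].
  destruct (conv_n2 (Lb w) (2 * Rabs w ^ 3) n0 H0) as [LB HLB].
  { intros n Hn. apply le_INR in Hn. generalize (Rabs_pos w); intro; apply Lb_step; lra. }
  exists LB. split; auto.
  apply is_lim_seq_unique.
  apply (is_lim_seq_ext (fun n => exp (Lb w n))).
  { intros n. symmetry. apply barnes_exp; auto. }
  apply is_lim_seq_continuous. apply derivable_continuous_pt, derivable_pt_exp. exact HLB.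
Qed.

Lemma barnesG_ln z (LB : R) : -1 < z - 1 -> is_lim_seq (Lb (z - 1)) LB ->
  0 < BarnesG z /\
  ln (BarnesG z) = (z - 1) / 2 * ln (2 * PI) - ((z - 1) + (z - 1)^2 * (1 + euler_gamma)) / 2 + LB.
Proof.
  intros Hw HLB.
  destruct (barnes_lim (z - 1) Hw) as [LB' [H1 H2]].
  assert (LB' = LB).
  { assert (E1 := is_lim_seq_unique _ _ H1). assert (E2 := is_lim_seq_unique _ _ HLB). rewrite E1 in E2.
    injection E2; auto. }
  subst LB'.
  unfold BarnesG. rewrite H2. simpl real. unfold Rpower.
  rewrite <- !exp_plus. split. apply exp_pos. rewrite ln_exp. field.
Qed.

Definition aterm (x : R) (k : nat) : R := let n := INR (S k) in
  (-1) ^ (S k) * n * (harmonic (S k) - ln (n + x - 1) - euler_gamma + x / n - 3 / (2 * n)).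

Fixpoint PS (x : R) (m : nat) : R := match m with O => 0 | S j => PS x j + aterm x j end.

Lemma sum_PS x N : sum_n (aterm x) N = PS x (S N).
Proof.
  induction N. rewrite sum_O. simpl. ring.
  rewrite sum_Sn, IHN. reflexivity.
Qed.

Fixpoint lr0 (y : R) (M : nat) : R := match M with O => 0 | S m => lr0 y m + ln (y + INR m) end.

Lemma PS_even x M : 0 < x ->
  PS x (2 * M) = (INR M + 1/2) * harmonic (2 * M) - harmonic M / 4 - euler_gamma * INR M
     - INR M * ln 2 - 2 * (Lb ((x + 1) / 2 - 1) M - Lb (x / 2 - 1) M) - INR M
     + (x / 2 - 3/4) * harmonic M - lr0 (x / 2) M.
Proof.
  intros Hx. induction M.
  - simpl. field.
  - replace (2 * S M)%nat with (S (S (2 * M))) by lia.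
    change (PS x (S (S (2 * M)))) with (PS x (2 * M) + aterm x (2 * M) + aterm x (S (2 * M))).
    rewrite IHM. unfold aterm.
    rewrite pow_1_odd. replace (S (S (2 * M))) with (2 * S M)%nat by lia. rewrite pow_1_even.
    replace (2 * S M)%nat with (S (S (2 * M))) by lia.
    change (harmonic (S (S (2 * M)))) with (harmonic (S (2 * M)) + / INR (S (S (2 * M)))).
    change (harmonic (S (2 * M))) with (harmonic (2 * M) + / INR (S (2 * M))).
    change (harmonic (S M)) with (harmonic M + / INR (S M)).
    change (lr0 (x/2) (S M)) with (lr0 (x/2) M + ln (x/2 + INR M)).
    change (Lb ?w (S M)) with (Lb w M + (INR (S M) * ln (1 + w / INR (S M)) - w + w^2 / (2 * INR (S M)))).
    rewrite !S_INR, INR_2n.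
    assert (HM : 0 <= INR M) by apply pos_INR.
    set (m := INR M) in *.
    replace (2 * m + 1 + x - 1) with (2 * (x/2 + m)) by field.
    replace (2 * m + 1 + 1 + x - 1) with (2 * (m + x/2 + 1/2)) by field.
    replace (1 + ((x + 1) / 2 - 1) / (m + 1)) with ((m + x/2 + 1/2) / (m + 1)) by (field; lra).
    replace (1 + (x / 2 - 1) / (m + 1)) with ((x/2 + m) / (m + 1)) by (field; lra).
    rewrite !ln_mult by lra. rewrite !ln_div by lra.
    field. lra.
Qed.

Lemma even_odd_lim (u : nat -> R) (l : R) :
  is_lim_seq (fun M => u (2 * M)%nat) l -> is_lim_seq (fun n => u (S n) - u n) 0 -> is_lim_seq u l.
Proof.
  intros He Hd. apply is_lim_seq_spec. apply is_lim_seq_spec in He. apply is_lim_seq_spec in Hd.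
  intros eps. destruct (He (pos_div_2 eps)) as [N1 H1]. destruct (Hd (pos_div_2 eps)) as [N2 H2].
  exists (2 * N1 + N2 + 1)%nat. intros n Hn. simpl in H1, H2.
  destruct (Nat.Even_or_Odd n) as [[M HM]|[M HM]].
  - subst n. assert (A := H1 M ltac:(lia)). destruct eps; simpl in *. lra.
  - subst n. assert (A := H1 M ltac:(lia)). assert (B := H2 (2 * M)%nat ltac:(lia)).
    rewrite Rminus_0_r in B. replace (2 * M + 1)%nat with (S (2 * M)) by lia.
    replace (u (S (2 * M)) - l) with ((u (S (2 * M)) - u (2 * M)%nat) + (u (2 * M)%nat - l)) by ring.
    eapply Rle_lt_trans. apply Rabs_triang. destruct eps; simpl in *. lra.
Qed.

Lemma lim_nln c : is_lim_seq (fun k => INR (S k) * ln (1 + c / INR (S k))) c.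
Proof.
  assert (H0 := lim_K_n1 (2 * c^2)).
  apply (is_lim_seq_ext (fun k => INR (S k) * ln (1 + c / INR (S k)) - c + c)). { intros; ring. }
  replace (Finite c) with (Finite (0 + c)) by (f_equal; ring).
  apply is_lim_seq_plus'. 2: apply is_lim_seq_const.
  apply is_lim_seq_abs_0.
  destruct (big_nat (2 * Rabs c)) as [n0 [Hn0 Hc]].
  apply (is_lim_seq_le_le_loc (fun _ => 0) _ (fun k => 2 * c^2 / INR (S k))).
  - exists n0. intros k Hk. split. apply Rabs_pos.
    assert (HN : INR n0 <= INR (S k)) by (apply le_INR; lia).
    assert (H1 : 1 <= INR n0) by (apply le_INR in Hn0; exact Hn0).
    set (N := INR (S k)) in *.
    assert (Ht : Rabs (c / N) <= 1/2).
    { unfold Rdiv. rewrite Rabs_mult, (Rabs_pos_eq (/ N)) by (left; apply Rinv_0_lt_compat; lra).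
      apply Rmult_le_reg_r with N. lra. rewrite Rmult_assoc, Rinv_l by lra. lra. }
    assert (A := ln_taylor1 _ Ht).
    replace (N * ln (1 + c / N) - c) with (N * (ln (1 + c / N) - c / N)) by (field; lra).
    rewrite Rabs_mult, Rabs_pos_eq by lra.
    replace (2 * c^2 / N) with (N * (2 * (c / N)^2)) by (field; lra).
    apply Rmult_le_compat_l. lra. exact A.
  - apply is_lim_seq_const.
  - apply (is_lim_seq_incr_1 (fun k => 2 * c^2 / INR k)). apply lim_K_n1.
Qed.

Lemma aterm_lim x : 0 < x -> is_lim_seq (aterm x) 0.
Proof.
  intros Hx. destruct euler_lim as [_ He].
  apply is_lim_seq_incr_1 in He.
  assert (Hl := lim_nln (x - 1)).
  apply is_lim_seq_abs_0.
  apply (is_lim_seq_ext (fun k => Rabs (INR (S k) * (u_g (S k) - euler_gamma) - INR (S k) * ln (1 + (x - 1) / INR (S k)) + x - 3/2))).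
  { intros k. unfold aterm. rewrite Rabs_mult, Rabs_mult, pow_1_abs, Rmult_1_l.
    assert (HN : 1 <= INR (S k)) by (rewrite S_INR; generalize (pos_INR k); lra).
    set (N := INR (S k)) in *.
    rewrite <- Rabs_mult. f_equal.
    unfold u_g. fold N.
    replace (N + x - 1) with (N + (x - 1)) by ring. rewrite (ln_shift N (x - 1)) by lra.
    field. lra. }
  replace 0 with (Rabs (1/2 - (x - 1) + x - 3/2)) by (rewrite <- Rabs_R0; f_equal; field).
  apply (is_lim_seq_abs _ (Finite (1/2 - (x - 1) + x - 3/2))).
  apply is_lim_seq_plus'. apply is_lim_seq_plus'. apply is_lim_seq_minus'. exact He. exact Hl.
  apply is_lim_seq_const. apply is_lim_seq_const.
Qed.

Lemma lr_lr0 y M : lr y M = lr0 y (S M).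
Proof.
  induction M.
  - simpl. rewrite Rplus_0_r. ring.
  - change (lr y (S M)) with (lr y M + ln (y + INR (S M))).
    change (lr0 y (S (S M))) with (lr0 y (S M) + ln (y + INR (S M))). rewrite IHM. reflexivity.
Qed.

Lemma PS_even_lim x (LB1 LB0 LG : R) : 0 < x ->
  is_lim_seq (Lb ((x + 1) / 2 - 1)) LB1 -> is_lim_seq (Lb (x / 2 - 1)) LB0 -> is_lim_seq (gseq (x/2)) LG ->
  is_lim_seq (fun M => PS x (2 * M)) (1/4 - ln (2 * PI) / 2 - 2 * (LB1 - LB0) + LG + ln 2 / 2
       - euler_gamma / 2 + x / 2 * euler_gamma).
Proof.
  intros Hx H1 H0 HG.
  destruct euler_lim as [Hu He].
  set (y := x / 2) in *.
  assert (Hy : 0 < y) by (unfold y; lra).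
  set (e := fun n => u_g n - euler_gamma).
  apply (is_lim_seq_ext_loc (fun M => / 2 * (INR (2 * M) * e (2 * M)%nat) + / 2 * e (2 * M)%nat - e M + y * e M
     - dS M - 2 * (Lb ((x + 1) / 2 - 1) M - Lb (x / 2 - 1) M) + gseq y M + ln (1 + y * / INR M)
     + ln 2 / 2 - euler_gamma / 2 + y * euler_gamma)).
  { exists 1%nat. intros M HM. rewrite PS_even by lra.
    assert (Hm : 1 <= INR M) by (apply le_INR in HM; exact HM).
    unfold e, u_g, dS, gseq. fold y.
    rewrite lr_lr0. change (lr0 y (S M)) with (lr0 y M + ln (y + INR M)).
    rewrite INR_2n. rewrite ln_mult by lra.
    replace (y + INR M) with (INR M + y) by ring.
    rewrite (ln_shift (INR M) y) by lra.
    unfold Rdiv at 6. rewrite Rmult_comm. unfold Rdiv. field. }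
  assert (He0 : is_lim_seq e 0).
  { unfold e. replace (Finite 0) with (Finite (euler_gamma - euler_gamma)) by (f_equal; ring).
    apply is_lim_seq_minus'. exact Hu. apply is_lim_seq_const. }
  assert (He2 : is_lim_seq (fun M => e (2 * M)%nat) 0).
  { apply (is_lim_seq_subseq e 0 (fun n => (2 * n)%nat)). apply eventually_subseq. intros; lia. exact He0. }
  assert (Hne2 : is_lim_seq (fun M => INR (2 * M) * e (2 * M)%nat) (1/2)).
  { apply (is_lim_seq_subseq (fun n => INR n * e n) (1/2) (fun n => (2 * n)%nat)).
    apply eventually_subseq. intros; lia. exact He. }
  assert (Hln : is_lim_seq (fun M => ln (1 + y * / INR M)) 0).
  { rewrite <- ln_1. apply lim_ln_cont. lra.
    replace (Finite 1) with (Finite (1 + y * 0)) by (f_equal; ring).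
    apply is_lim_seq_plus'. apply is_lim_seq_const. apply lim_scal. exact lim_inv_n. }
  assert (T : 1/4 - ln (2 * PI) / 2 - 2 * (LB1 - LB0) + LG + ln 2 / 2 - euler_gamma / 2 + y * euler_gamma
     = / 2 * (1/2) + / 2 * 0 - 0 + y * 0 - ln (2 * PI) / 2 - 2 * (LB1 - LB0) + LG + 0 + ln 2 / 2
       - euler_gamma / 2 + y * euler_gamma) by field.
  rewrite T.
  repeat (apply is_lim_seq_minus' || apply is_lim_seq_plus').
  all: try apply is_lim_seq_const.
  all: try (apply lim_scal).
  all: try assumption.
  all: try apply stirling_const.
  apply is_lim_seq_minus'; assumption.
Qed.

Theorem mainTheorem14 (x : R) (hx : 0 < x) :
  is_series
    (fun k : nat =>
       let n := INR (S k) in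
       (-1) ^ (S k) * n *
       (harmonic (S k) - ln (n + x - 1) - euler_gamma + x / n - 3 / (2 * n)))
    (euler_gamma / 4 - (x - ln 2 - 1) / 2
     - 2 * ln (BarnesG ((x + 1) / 2) / BarnesG (x / 2))
     + ln (Gamma (x / 2))).
Proof.
  destruct (barnes_lim ((x + 1) / 2 - 1) ltac:(lra)) as [LB1 [HB1 _]].
  destruct (barnes_lim (x / 2 - 1) ltac:(lra)) as [LB0 [HB0 _]].
  destruct (gamma_lim (x / 2) ltac:(lra)) as [LG [HG HlnG]].
  destruct (barnesG_ln ((x + 1) / 2) LB1 ltac:(lra) HB1) as [P1 E1].
  destruct (barnesG_ln (x / 2) LB0 ltac:(lra) HB0) as [P0 E0].
  assert (Hpi := PI_RGT_0).
  replace (euler_gamma / 4 - (x - ln 2 - 1) / 2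
     - 2 * ln (BarnesG ((x + 1) / 2) / BarnesG (x / 2))
     + ln (Gamma (x / 2))) with
    (1/4 - ln (2 * PI) / 2 - 2 * (LB1 - LB0) + LG + ln 2 / 2
       - euler_gamma / 2 + x / 2 * euler_gamma).
  2:{ rewrite ln_div by auto. rewrite E1, E0, HlnG. field. }
  change (is_lim_seq (sum_n (aterm x)) (1/4 - ln (2 * PI) / 2 - 2 * (LB1 - LB0) + LG + ln 2 / 2
       - euler_gamma / 2 + x / 2 * euler_gamma)).
  apply (is_lim_seq_ext (fun N => PS x (S N))). { intros N. symmetry. apply sum_PS. }
  apply (is_lim_seq_incr_1 (PS x)).
  apply (even_odd_lim (PS x)).
  - apply PS_even_lim; auto.
  - apply (is_lim_seq_ext (aterm x)). { intros n. change (PS x (S n)) with (PS x n + aterm x n). ring. }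
    apply aterm_lim. exact hx.
Qed.
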